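(* Let $\mathcal{A}$ be a unital algebra generated by two unital subalgebras $\mathcal{A}_1,\mathcal{A}_2$. Let $\mathcal{I}_1$ (resp. $\mathcal{I}_2$) be an ideal of $\mathcal{A}_1$ (resp. $\mathcal{A}_2$) and $\mathcal{I}$ the ideal of $\mathcal{A}$ generated by $\mathcal{I}_1\cup \mathcal{I}_2$. Let $\tau: \mathcal{A}\to \mathbb{C}$ be a unital linear functional with $\mathcal{I}\subset \ker(\tau)$ and $\tau': \mathcal{I}\to \mathbb{C}$ a linear functional such that $(\mathcal{A}_1,\mathcal{I}_1)$ and $(\mathcal{A}_2,\mathcal{I}_2)$ are free of type $B$ in $(\mathcal{A},\tau,\mathcal{I},\tau')$. Then the pair $(\mathcal{I}_1,\mathcal{A}_2)$ is cyclically monotone with respect to $(\tau',\tau)$.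
   Context: Freeness of type $B$ in $(\mathcal{A},\tau,\mathcal{I},\tau')$ for $(\mathcal{A}_1,\mathcal{I}_1)$, $(\mathcal{A}_2,\mathcal{I}_2)$: $\mathcal{A}_1,\mathcal{A}_2$ are free w.r.t. $\tau$, and whenever $a_n\in\mathcal{A}_{i_n},\dots,a_1\in\mathcal{A}_{i_1}$, $v\in\mathcal{I}_h$, $b_1\in\mathcal{A}_{j_1},\dots,b_m\in\mathcal{A}_{j_m}$ with any two consecutive indices in $i_n,\dots,i_1,h,j_1,\dots,j_m$ different and all $a_r,b_s$ centered for $\tau$, $\tau'(a_n\cdots a_1vb_1\cdots b_m)=\tau(a_nb_m)\cdots\tau(a_1b_1)\tau'(v)$ if $n=m$ and $i_r=j_r$ for all $r$, and $=0$ otherwise. The pair $(\mathcal{I}_1,\mathcal{A}_2)$ is cyclically monotone w.r.t. $(\tau',\tau)$ if for all $a_1,\dots,a_n\in\mathcal{I}_1$ and $b_0,\dots,b_n\in\mathcal{A}_2$, $\tau'(b_0a_1b_1\cdots a_nb_n)=\tau'(a_1\cdots a_n)\tau(b_1)\cdots\tau(b_{n-1})\tau(b_0b_n)$. *)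

(* Defs.v *)
From mathcomp Require Import all_boot all_algebra.
From mathcomp Require Import reals.
From mathcomp.real_closed Require Export complex.
Set Implicit Arguments. Unset Strict Implicit. Unset Printing Implicit Defensive.
Import GRing.Theory.
Local Open Scope ring_scope.

Section Defs.
Variables (K : comNzRingType) (A : algType K).

Definition is_unital_subalg (S : A -> Prop) : Prop :=
  [/\ S 1,
      (forall (c : K) x y, S x -> S y -> S (c *: x + y)) &
      (forall x y, S x -> S y -> S (x * y))].

Definition generated_by (A1 A2 : A -> Prop) : Prop :=
  forall S : A -> Prop, is_unital_subalg S ->
    (forall x, A1 x -> S x) -> (forall x, A2 x -> S x) -> forall x, S x.

Definition is_ideal_of (B J : A -> Prop) : Prop :=
  [/\ (forall x, J x -> B x), J 0,
      (forall (c : K) x y, J x -> J y -> J (c *: x + y)) &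
      (forall b x, B b -> J x -> J (b * x) /\ J (x * b))].

Definition gen_ideal (I1 I2 : A -> Prop) : A -> Prop :=
  fun x => forall J : A -> Prop, is_ideal_of (fun _ => True) J ->
    (forall y, I1 y -> J y) -> (forall y, I2 y -> J y) -> J x.

(* f is linear on the subspace D (values of f outside D are irrelevant). *)
Definition linear_on (D : A -> Prop) (f : A -> K) : Prop :=
  forall (c : K) x y, D x -> D y -> f (c *: x + y) = c * f x + f y.

(* Index convention: false stands for 1 and true stands for 2. *)
Definition sel (X1 X2 : A -> Prop) (b : bool) : A -> Prop :=
  if b then X2 else X1.

Definition alternating (s : seq bool) : bool := sorted (fun x y => x != y) s.

Definition free_wrt (tau : A -> K) (A1 A2 : A -> Prop) : Prop :=
  forall n (a : 'I_n -> A) (i : 'I_n -> bool),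
    (0 < n)%N ->
    alternating [seq i k | k <- enum 'I_n] ->
    (forall k, sel A1 A2 (i k) (a k)) ->
    (forall k, tau (a k) = 0) ->
    tau (\prod_(k < n) a k) = 0.

(* (A1, I1), (A2, I2) are free of type B in (A, tau, I, tau').
   a k stands for a_{k+1}, ia k for i_{k+1}; b k for b_{k+1}, jb k for j_{k+1}. *)
Definition free_typeB (tau tau' : A -> K) (A1 I1 A2 I2 : A -> Prop) : Prop :=
  free_wrt tau A1 A2 /\
  forall n m (a : 'I_n -> A) (ia : 'I_n -> bool) (v : A) (h : bool)
         (b : 'I_m -> A) (jb : 'I_m -> bool),
    alternating ([seq ia (rev_ord k) | k <- enum 'I_n] ++
                 h :: [seq jb k | k <- enum 'I_m]) ->
    (forall k, sel A1 A2 (ia k) (a k)) ->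
    sel I1 I2 h v ->
    (forall k, sel A1 A2 (jb k) (b k)) ->
    (forall k, tau (a k) = 0) ->
    (forall k, tau (b k) = 0) ->
    let w := (\prod_(k < n) a (rev_ord k)) * v * (\prod_(k < m) b k) in
    (forall e : n = m, (forall k, ia k = jb (cast_ord e k)) ->
       tau' w = (\prod_(k < n) tau (a (rev_ord k) * b (cast_ord e (rev_ord k))))
                * tau' v) /\
    (~ (exists e : n = m, forall k, ia k = jb (cast_ord e k)) -> tau' w = 0).

(* (I1, A2) is cyclically monotone w.r.t. (tau', tau).
   a k stands for a_{k+1} (k < n), b k for b_k (k <= n). *)
Definition cyclically_monotone (tau' tau : A -> K) (I1 A2 : A -> Prop) : Prop :=
  forall n (a : 'I_n -> A) (b : 'I_n.+1 -> A),
    (0 < n)%N ->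
    (forall k, I1 (a k)) -> (forall k, A2 (b k)) ->
    tau' (b ord0 * \prod_(k < n) (a k * b (lift ord0 k))) =
      tau' (\prod_(k < n) a k) * (\prod_(k < n.+1 | (0 < k < n)%N) tau (b k))
      * tau (b ord0 * b ord_max).

End Defs.

(* Main.v *)
Require Import Defs.
From mathcomp Require Import all_boot all_algebra.
From mathcomp Require Import reals.
From mathcomp.real_closed Require Import complex.
Set Implicit Arguments. Unset Strict Implicit. Unset Printing Implicit Defensive.
Import GRing.Theory.
Local Open Scope ring_scope.

Lemma alt_iota (f : nat -> bool) k m : (forall i, f i.+1 = ~~ f i) ->
  alternating (map f (iota k m)).
Proof.
move=> Hf; elim: m k => [|m IH] k //; case: m IH => [|m] IH //.
have := IH k.+1; rewrite /alternating /= Hf => ->; rewrite andbT.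
by case: (f k).
Qed.

Lemma map_enum_iota (T : Type) m (F : nat -> T) :
  [seq F (nat_of_ord k) | k <- enum 'I_m] = map F (iota 0 m).
Proof. by rewrite -val_enum_ord -map_comp. Qed.

Lemma iota_odd k m :
  map (fun i => ~~ odd i) (iota k m) = map odd (iota k.+1 m).
Proof. by elim: m k => //= m IH k; rewrite IH. Qed.

Lemma iota_odd2 k m :
  map odd (iota k m) = map (fun i => ~~ odd i) (iota k.+1 m).
Proof. by elim: m k => //= m IH k; rewrite IH negbK. Qed.

Section Main.
Variables (R : realType) (A : algType R[i]) (A1 A2 I1 I2 : A -> Prop)
  (tau tau' : A -> R[i]).
Hypotheses (HA1 : is_unital_subalg A1) (HA2 : is_unital_subalg A2)
  (HI1 : is_ideal_of A1 I1)
  (Htl : linear_on (fun _ => True) tau) (Ht1 : tau 1 = 1)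
  (HtJ : forall x, gen_ideal I1 I2 x -> tau x = 0)
  (Ht' : linear_on (gen_ideal I1 I2) tau')
  (HB : free_typeB tau tau' A1 I1 A2 I2).

Local Notation J := (gen_ideal I1 I2).

Lemma J_I1 x : I1 x -> J x.
Proof. by move=> Ix K _ h1 _; apply: h1. Qed.

Lemma J_lin k x y : J x -> J y -> J (k *: x + y).
Proof.
move=> hx hy K hK h1 h2; case: (hK) => _ _ hl _.
by apply: hl; [apply: hx | apply: hy].
Qed.

Lemma J0 : J 0.
Proof. by move=> K hK _ _; case: hK. Qed.

Lemma J_mull b x : J x -> J (b * x).
Proof. by move=> hx K hK h1 h2; case: (hK) => _ _ _ hm; exact: (hm b x I (hx K hK h1 h2)).1. Qed.

Lemma J_mulr b x : J x -> J (x * b).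
Proof. by move=> hx K hK h1 h2; case: (hK) => _ _ _ hm; exact: (hm b x I (hx K hK h1 h2)).2. Qed.

Lemma J_scale k x : J x -> J (k *: x).
Proof. by move=> hx; rewrite -[_ *: _]addr0; apply: J_lin => //; apply: J0. Qed.

Lemma J_add x y : J x -> J y -> J (x + y).
Proof. by move=> hx hy; rewrite -[x]scale1r; apply: J_lin. Qed.

Lemma I1_A1 x : I1 x -> A1 x.
Proof. by case: HI1 => h _ _ _; apply: h. Qed.

Lemma I1_mulr x y : I1 x -> I1 y -> I1 (x * y).
Proof. by case: HI1 => _ _ _ hm hx hy; exact: (hm y x (I1_A1 hy) hx).2. Qed.

Lemma tau0 : tau 0 = 0.
Proof.
have := @Htl 1 0 0 I I; rewrite scale1r addr0 mul1r.
by move/(congr1 (fun z => z - tau 0)); rewrite subrr addrK.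
Qed.

Lemma tauD x y : tau (x + y) = tau x + tau y.
Proof. by have := @Htl 1 x y I I; rewrite scale1r mul1r. Qed.

Lemma tauZ k x : tau (k *: x) = k * tau x.
Proof. by have := @Htl k x 0 I I; rewrite !addr0 tau0 addr0. Qed.

Lemma tau'0 : tau' 0 = 0.
Proof.
have := Ht' 1 J0 J0; rewrite scale1r addr0 mul1r.
by move/(congr1 (fun z => z - tau' 0)); rewrite subrr addrK.
Qed.

Lemma tau'D x y : J x -> J y -> tau' (x + y) = tau' x + tau' y.
Proof. by move=> hx hy; have := Ht' 1 hx hy; rewrite scale1r mul1r. Qed.

Lemma tau'Z k x : J x -> tau' (k *: x) = k * tau' x.
Proof. by move=> hx; have := Ht' k hx J0; rewrite !addr0 tau'0 addr0. Qed.

Definition cen (b : A) := b - tau b *: 1.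

Lemma cenE b : b = cen b + tau b *: 1.
Proof. by rewrite /cen subrK. Qed.

Lemma tau_cen b : tau (cen b) = 0.
Proof.
by rewrite /cen addrC -scaleNr tauD tauZ Ht1 mulr1 addNr.
Qed.

Lemma A2_cen b : A2 b -> A2 (cen b).
Proof.
case: HA2 => h1 hl _ hb; rewrite /cen addrC -scaleNr; exact: hl.
Qed.

Definition okR (l : seq A) := forall i, (i < size l)%N ->
  sel A1 A2 (~~ odd i) (nth 0 l i) /\ tau (nth 0 l i) = 0.

Lemma prod_nth (l : seq A) : \prod_(y <- l) y = \prod_(k < size l) nth 0 l k.
Proof. by rewrite (big_nth 0) big_mkord. Qed.

Lemma K0 c l : I1 c -> okR l -> (2 <= size l)%N -> tau' (c * \prod_(y <- l) y) = 0.
Proof.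
move=> Hc Hl Hs.
have := (HB.2 0 (size l) (fun _ => 0) (fun _ => true) c false
   (fun k => nth 0 l k) (fun k => ~~ odd k)).
have Halt : alternating ([seq (fun _ : 'I_0 => true) (rev_ord k) | k <- enum 'I_0]
   ++ false :: [seq ~~ odd (nat_of_ord k) | k <- enum 'I_(size l)]).
  rewrite enum_ord0 /= (map_enum_iota _ (fun k => ~~ odd k)) iota_odd.
  have := @alt_iota odd 0 (size l).+1 (fun i => erefl); by [].
move/(_ Halt (fun k => match k with Ordinal _ p => False_ind _ (notF p) end) Hc).
move/(_ (fun k => (Hl k (ltn_ord k)).1) (fun k => match k with Ordinal _ p => False_ind _ (notF p) end)).
move/(_ (fun k => (Hl k (ltn_ord k)).2)) => /= [_ H2].
rewrite prod_nth; move: H2; rewrite big_ord0 mul1r; apply.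
by case=> e _; move: Hs; rewrite -e.
Qed.

Lemma K1 c l b0 : I1 c -> okR l -> (2 <= size l)%N -> A2 b0 -> tau b0 = 0 ->
  tau' (b0 * (c * \prod_(y <- l) y)) = 0.
Proof.
move=> Hc Hl Hs Hb0 Htb0.
have := (HB.2 1 (size l) (fun _ => b0) (fun _ => true) c false
   (fun k => nth 0 l k) (fun k => ~~ odd k)).
have Halt : alternating ([seq (fun _ : 'I_1 => true) (rev_ord k) | k <- enum 'I_1]
   ++ false :: [seq ~~ odd (nat_of_ord k) | k <- enum 'I_(size l)]).
  rewrite enum_ordSl enum_ord0 /= (map_enum_iota _ (fun k => ~~ odd k)) iota_odd iota_odd2.
  have := @alt_iota (fun i => ~~ odd i) 0 (size l).+2 (fun i => erefl); by [].
move/(_ Halt (fun k => Hb0) Hc).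
move/(_ (fun k => (Hl k (ltn_ord k)).1) (fun k => Htb0)).
move/(_ (fun k => (Hl k (ltn_ord k)).2)) => /= [_ H2].
rewrite prod_nth mulrA; move: H2; rewrite big_ord1; apply.
by case=> e _; move: Hs; rewrite -e.
Qed.

Lemma J_prod c l : I1 c -> J (c * \prod_(y <- l) y).
Proof. by move=> Hc; apply: J_mulr; apply: J_I1. Qed.

Lemma Kgen c l b0 : I1 c -> okR l -> (2 <= size l)%N -> A2 b0 ->
  tau' (b0 * (c * \prod_(y <- l) y)) = 0.
Proof.
move=> Hc Hl Hs Hb0.
have JX := J_prod l Hc.
rewrite [b0]cenE mulrDl -scalerAl mul1r tau'D ?tau'Z ?K0 ?K1 ?tau_cen ?mulr0 ?addr0 //.
- by apply: A2_cen.
- by apply: J_mull.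
- by apply: J_scale.
Qed.

Lemma okR_rcons l x : okR l -> sel A1 A2 (~~ odd (size l)) x -> tau x = 0 ->
  okR (rcons l x).
Proof.
move=> Hl Hx Htx i; rewrite size_rcons ltnS leq_eqVlt nth_rcons.
case: (ltngtP i (size l)) => //= [/Hl //|->] _; by [].
Qed.

Lemma prod_rcons (l : seq A) x : \prod_(y <- rcons l x) y = \prod_(y <- l) y * x.
Proof. by rewrite -cats1 big_cat big_seq1. Qed.

Lemma scal_r (Y : A) k : k *: Y = Y * (k *: 1).
Proof. by rewrite -scalerAr mulr1. Qed.

Definition Wd x := exists c l c', [/\ I1 c, I1 c', okR l, odd (size l) &
  x = c * \prod_(y <- l) y * c'].

Definition G x := J x /\ forall b0 bn, A2 b0 -> A2 bn -> tau' (b0 * x * bn) = 0.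

Lemma Wd_G x : Wd x -> G x.
Proof.
case=> c [l [c' [Hc Hc' Hl Ho ->]]].
have Jc' : J c' by apply: J_I1.
have Hl1 : okR (rcons l c').
  by apply: okR_rcons => //; [rewrite Ho /=; apply: I1_A1 | apply: HtJ].
split; first by apply: J_mulr; apply: J_prod.
move=> b0 bn Hb0 Hbn.
have Hl2 : okR (rcons (rcons l c') (cen bn)).
  apply: okR_rcons => //; last by apply: tau_cen.
  by rewrite size_rcons /= negbK Ho; apply: A2_cen.
rewrite -[c * _ * c']mulrA -prod_rcons.
have E : b0 * (c * \prod_(y <- rcons l c') y) * bn =
  b0 * (c * \prod_(y <- rcons (rcons l c') (cen bn)) y) +
  tau bn *: (b0 * (c * \prod_(y <- rcons l c') y)).
  by rewrite !prod_rcons scal_r !mulrA -mulrDr -cenE.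
have Hsz : (0 < size l)%N by case: (size l) Ho.
rewrite E tau'D; last 2 first.
- by apply: J_mull; apply: J_prod.
- by apply: J_scale; apply: J_mull; apply: J_prod.
rewrite tau'Z; last by apply: J_mull; apply: J_prod.
by rewrite !Kgen ?size_rcons ?mulr0 ?addr0.
Qed.

Definition Sp x := forall S : A -> Prop, S 0 ->
  (forall k x y, S x -> S y -> S (k *: x + y)) -> (forall w, Wd w -> S w) -> S x.

Lemma Sp0 : Sp 0.
Proof. by move=> S. Qed.

Lemma Sp_lin k x y : Sp x -> Sp y -> Sp (k *: x + y).
Proof. by move=> hx hy S h0 hl hw; exact: hl (hx S h0 hl hw) (hy S h0 hl hw). Qed.

Lemma Sp_Wd w : Wd w -> Sp w.
Proof. by move=> hw S _ _; apply. Qed.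

Ltac jt := first [ assumption | (apply: J_add; jt) | (apply: J_scale; jt)
  | (apply: J_mull; jt) | (apply: J_mulr; jt) ].

Lemma Sp_G x : Sp x -> G x.
Proof.
apply.
- split; first by apply: J0.
  by move=> b0 bn _ _; rewrite mulr0 mul0r tau'0.
- move=> k x1 y1 [Jx Hx] [Jy Hy]; split; first by apply: J_lin.
  move=> b0 bn h0 hn; rewrite mulrDr mulrDl -scalerAr -scalerAl.
  rewrite tau'D; [|jt|jt]. rewrite tau'Z; last jt.
  by rewrite Hx ?Hy ?mulr0 ?addr0.
- exact: Wd_G.
Qed.

Lemma Sp_mulr z x : (forall w, Wd w -> Sp (w * z)) -> Sp x -> Sp (x * z).
Proof.
move=> Hw hx; apply: (hx (fun y => Sp (y * z))) => [|k x1 y1 h1 h2|w /Hw //].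
- by rewrite mul0r; apply: Sp0.
- by rewrite mulrDl -scalerAl; apply: Sp_lin.
Qed.

Lemma expand4 (u v x : A) k l : (u + k *: 1) * x * (v + l *: 1) =
  u * x * v + (l *: (u * x) + (k *: (x * v) + (k * l) *: x)).
Proof.
rewrite !(mulrDl, mulrDr) -!scalerAl -!scalerAr !mul1r !mulr1 scalerA.
by rewrite -!addrA; congr (_ + _); rewrite addrCA.
Qed.

Lemma Fl x b0 bn : I1 x -> A2 b0 -> A2 bn ->
  tau' (b0 * x * bn) = tau (b0 * bn) * tau' x.
Proof.
move=> Hx Hb0 Hbn.
set u := cen b0; set v := cen bn.
have Hu : A2 u by apply: A2_cen.
have Hv : A2 v by apply: A2_cen.
have tu : tau u = 0 by apply: tau_cen.
have tv : tau v = 0 by apply: tau_cen.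
have Jx : J x by apply: J_I1.
have F11 : tau' (u * x * v) = tau (u * v) * tau' x.
  have := HB.2 1 1 (fun _ => u) (fun _ => true) x false (fun _ => v) (fun _ => true).
  have Halt : alternating ([seq (fun _ : 'I_1 => true) (rev_ord k) | k <- enum 'I_1]
     ++ false :: [seq (fun _ : 'I_1 => true) k | k <- enum 'I_1]).
    by rewrite enum_ordSl enum_ord0.
  move/(_ Halt (fun _ => Hu) Hx (fun _ => Hv) (fun _ => tu) (fun _ => tv)) => /= [H1 _].
  by have := H1 (erefl 1) (fun _ => erefl); rewrite !big_ord1.
have F10 : tau' (u * x) = 0.
  have := HB.2 1 0 (fun _ => u) (fun _ => true) x false (fun _ => 0) (fun _ => true).
  have Halt : alternating ([seq (fun _ : 'I_1 => true) (rev_ord k) | k <- enum 'I_1]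
     ++ false :: [seq (fun _ : 'I_0 => true) k | k <- enum 'I_0]).
    by rewrite enum_ordSl !enum_ord0.
  move/(_ Halt (fun _ => Hu) Hx (fun k => match k with Ordinal _ p => False_ind _ (notF p) end)).
  move/(_ (fun _ => tu) (fun k => match k with Ordinal _ p => False_ind _ (notF p) end)).
  move=> /= [_ H2]; move: H2; rewrite big_ord1 big_ord0 mulr1; apply.
  by case.
have F01 : tau' (x * v) = 0.
  have := HB.2 0 1 (fun _ => 0) (fun _ => true) x false (fun _ => v) (fun _ => true).
  have Halt : alternating ([seq (fun _ : 'I_0 => true) (rev_ord k) | k <- enum 'I_0]
     ++ false :: [seq (fun _ : 'I_1 => true) k | k <- enum 'I_1]).
    by rewrite enum_ordSl !enum_ord0.
  move/(_ Halt (fun k => match k with Ordinal _ p => False_ind _ (notF p) end) Hx (fun _ => Hv)).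
  move/(_ (fun k => match k with Ordinal _ p => False_ind _ (notF p) end) (fun _ => tv)).
  move=> /= [_ H2]; move: H2; rewrite big_ord1 big_ord0 mul1r; apply.
  by case.
have -> : b0 * x * bn = (u + tau b0 *: 1) * x * (v + tau bn *: 1) by rewrite -!cenE.
have -> : b0 * bn = (u + tau b0 *: 1) * 1 * (v + tau bn *: 1) by rewrite -!cenE mulr1.
rewrite !expand4 !mulr1 !mul1r !tauD !tauZ tu tv Ht1.
rewrite tau'D; [|jt|jt]. rewrite tau'D; [|jt|jt]. rewrite tau'D; [|jt|jt].
rewrite !tau'Z; [|jt|jt|jt].
rewrite F11 F10 F01 !mulr0 !add0r mulr1.
by rewrite [RHS]mulrDl.
Qed.

Lemma prodI1 (al : nat -> A) p : (forall i, I1 (al i)) ->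
  I1 (\prod_(0 <= i < p.+1) al i).
Proof.
move=> Ha; elim: p => [|p IH]; first by rewrite big_nat1.
by rewrite big_nat_recr //; apply: I1_mulr.
Qed.

Lemma main_ind (al be : nat -> A) : (forall i, I1 (al i)) -> (forall i, A2 (be i)) ->
  forall p, exists g, Sp g /\ (\prod_(0 <= i < p) (al i * be i.+1)) * al p =
     (\prod_(1 <= i < p.+1) tau (be i)) *: (\prod_(0 <= i < p.+1) al i) + g.
Proof.
move=> Ha Hb; elim=> [|p [g [Hg E]]].
  exists 0; split; first exact: Sp0.
  by rewrite big_nat1 !big_geq // scale1r mul1r addr0.
have HAp := prodI1 p Ha.
rewrite (big_nat_recr p) // (big_nat_recr p.+1 1) // (big_nat_recr p.+1 0) //=.
have -> : \prod_(0 <= i < p) (al i * be i.+1) * (al p * be p.+1) * al p.+1 =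
  (\prod_(0 <= i < p) (al i * be i.+1) * al p) * (be p.+1 * al p.+1) by rewrite !mulrA.
rewrite E.
have -> : be p.+1 * al p.+1 = cen (be p.+1) * al p.+1 + tau (be p.+1) *: al p.+1.
  by rewrite {1}[be p.+1]cenE mulrDl -scalerAl mul1r.
set t := tau (be p.+1); set bc := cen (be p.+1); set a' := al p.+1.
set Ap := \prod_(0 <= i < p.+1) al i; set s := \prod_(1 <= i < p.+1) tau (be i).
exists (s *: (Ap * (bc * a')) + (t *: (g * a') + g * (bc * a'))).
split.
- apply: Sp_lin; last apply: Sp_lin.
  + apply: Sp_Wd; exists Ap, [:: bc], a'; split => //.
    * exact: Ha.
    * move=> [|i] //= _; split; [exact: A2_cen | exact: tau_cen].
    * by rewrite big_seq1 mulrA.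
  + apply: Sp_mulr Hg => w [c [l [c' [Hc Hc' Hl Ho ->]]]].
    apply: Sp_Wd; exists c, l, (c' * a'); split => //; last by rewrite mulrA.
    by apply: I1_mulr => //; exact: Ha.
  + apply: Sp_mulr Hg => w [c [l [c' [Hc Hc' Hl Ho ->]]]].
    apply: Sp_Wd; exists c, (rcons (rcons l c') bc), a'; split => //.
    * exact: Ha.
    * apply: okR_rcons; first apply: okR_rcons => //.
      - by rewrite Ho /=; apply: I1_A1.
      - by apply: HtJ; apply: J_I1.
      - by rewrite size_rcons /= negbK Ho; apply: A2_cen.
      - exact: tau_cen.
    * by rewrite !size_rcons /= negbK.
    * by rewrite !prod_rcons !mulrA.
- rewrite mulrDl !mulrDr -!scalerAl -!scalerAr scalerA.
  by rewrite [_ + (s * t) *: _]addrC -!addrA [t *: _ + _]addrC.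
Qed.

Lemma final : cyclically_monotone tau' tau I1 A2.
Proof.
move=> [|n'] a b // _ Ha Hb.
pose al := fun i => a (inord i); pose be := fun i => b (inord i).
have ea : forall k : 'I_n'.+1, a k = al k by move=> k; rewrite /al inord_val.
have eb : forall k : 'I_n'.+2, b k = be k by move=> k; rewrite /be inord_val.
have E1 : \prod_(k < n'.+1) (a k * b (lift ord0 k)) =
    \prod_(0 <= i < n') (al i * be i.+1) * al n' * be n'.+1.
  rewrite -mulrA -(big_nat_recr n' 0 (fun i => al i * be i.+1)) // big_mkord.
  by apply: eq_bigr => k _; rewrite ea eb lift0.
have E2 : \prod_(k < n'.+1) a k = \prod_(0 <= i < n'.+1) al i.
  by rewrite big_mkord; apply: eq_bigr => k _; rewrite ea.
have E3 : \prod_(k < n'.+2 | (0 < k < n'.+1)%N) tau (b k) =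
    \prod_(1 <= i < n'.+1) tau (be i).
  rewrite (eq_bigr (fun k : 'I_n'.+2 => tau (be k))); last by move=> k _; rewrite eb.
  rewrite -(big_mkord (fun k => (0 < k < n'.+1)%N) (fun k => tau (be k))).
  rewrite big_ltn_cond //= (big_nat_widen 1 n'.+1 n'.+2) //.
  rewrite big_nat_cond [RHS]big_nat_cond; apply: eq_bigl => i.
  by case: i.
rewrite E1 E2 E3 !eb.
have [g [Hg Eg]] := main_ind (fun i => Ha (inord i)) (fun i => Hb (inord i)) n'.
rewrite mulrA Eg mulrDr mulrDl -scalerAr -scalerAl.
have HAp := prodI1 n' (fun i => Ha (inord i)).
have JAp := J_I1 HAp.
have [Jg Gg] := Sp_G Hg.
rewrite tau'D; [|jt|jt]. rewrite tau'Z; [|jt].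
rewrite Gg ?Fl ?addr0 //.
rewrite /= [RHS]mulrAC [RHS]mulrC; congr (_ * _); rewrite mulrC.
all: try exact: Hb.
by [].
Qed.

End Main.

Theorem proposition2p17 (R : realType) (A : algType R[i])
    (A1 A2 I1 I2 : A -> Prop) (tau tau' : A -> R[i]) :
  is_unital_subalg A1 -> is_unital_subalg A2 ->
  generated_by A1 A2 ->
  is_ideal_of A1 I1 -> is_ideal_of A2 I2 ->
  linear_on (fun _ => True) tau -> tau 1 = 1 ->
  (forall x, gen_ideal I1 I2 x -> tau x = 0) ->
  linear_on (gen_ideal I1 I2) tau' ->
  free_typeB tau tau' A1 I1 A2 I2 ->
  cyclically_monotone tau' tau I1 A2.
Proof.
move=> HA1 HA2 HG HI1 HI2 Htl Ht1 HtJ Ht' HB.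
exact (@final R A A1 A2 I1 I2 tau tau' HA2 HI1 Htl Ht1 HtJ Ht' HB).
Qed.
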